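(* Let $G$ be a simple connected graph with $n$ vertices and $m$ edges, let $k\ge1$ be an integer, and let $S_{2k}(G)$ be the $2k$-parallel subdivision graph of $G$. If $\zeta\notin\{\frac12,\frac32\}$ is an eigenvalue of $\mathscr{L}(S_{2k}(G))$, then $\zeta(4\zeta^2-12\zeta+9)$ is an eigenvalue of $\mathscr{L}(G)$, and its multiplicity is the same as that of $\zeta$.
   Context: For a graph $H$ with adjacency matrix $A(H)$ and diagonal degree matrix $D(H)$ (no isolated vertices), the normalized Laplacian is $\mathscr{L}(H)=I-D(H)^{-1/2}A(H)D(H)^{-1/2}$. The $2k$-parallel subdivision graph $S_{2k}(G)$ is obtained from $G$ by replacing each edge $uv$ of $G$ by $k$ internally disjoint paths $u-w_1-w_2-v$ of length $3$ (each with its own two new internal vertices). *)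

(* Defs.v *)
From HB Require Import structures.
From mathcomp Require Import all_boot all_order all_algebra.
Set Implicit Arguments. Unset Strict Implicit. Unset Printing Implicit Defensive.
Import Order.TTheory GRing.Theory Num.Theory.
Local Open Scope ring_scope.

(* A simple graph on a finite vertex type T is a symmetric irreflexive
   relation r : rel T.  Matrices are indexed by 'I_#|T| via enum_val. *)

Section NormLap.
Variable R : rcfType.
Variable T : finType.
Variable r : rel T.

Definition gdeg (x : T) : nat := #|[set y | r x y]|.

Definition adjmx : 'M[R]_#|T| :=
  \matrix_(i, j) (r (enum_val i) (enum_val j))%:R.

Definition degmx_invsqrt : 'M[R]_#|T| :=
  diag_mx (\row_i (Num.sqrt ((gdeg (enum_val i))%:R : R))^-1).

Definition nlap : 'M[R]_#|T| :=
  1%:M - degmx_invsqrt *m adjmx *m degmx_invsqrt.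
End NormLap.

(* New (internal) vertices are pairs (d, i) where d = (u, v) is an ORIENTED
   edge (e u v) and i : 'I_k.  For each unordered edge {u,v} and each i < k,
   the path  u - w_{(u,v),i} - w_{(v,u),i} - v  is added; thus each edge is
   replaced by k internally disjoint paths of length 3 with two fresh
   internal vertices each. *)
Definition sdv_int (V : finType) (e : rel V) (k : nat) : finType :=
  ({d : V * V | e d.1 d.2} * 'I_k)%type.

Definition sdv_vert (V : finType) (e : rel V) (k : nat) : finType :=
  (V + sdv_int e k)%type.

Definition sdv_adj (V : finType) (e : rel V) (k : nat) : rel (sdv_vert e k) :=
  fun x y =>
    match x, y with
    | inl u, inl v => false
    | inl u, inr w => (val w.1).1 == u
    | inr w, inl u => (val w.1).1 == u
    | inr w1, inr w2 =>
        [&& w1.2 == w2.2, (val w2.1).1 == (val w1.1).2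
          & (val w2.1).2 == (val w1.1).1]
    end.

(* Main.v *)
Require Import Defs.
From HB Require Import structures.
From mathcomp Require Import all_boot all_order all_algebra.
From mathcomp Require Import ring lra.
Set Implicit Arguments. Unset Strict Implicit. Unset Printing Implicit Defensive.
Import Order.TTheory GRing.Theory Num.Theory.
Local Open Scope ring_scope.

Section Gen.
Variable R : rcfType.

Definition degR (T : finType) (r : rel T) (t : T) : R := (gdeg r t)%:R.
Definition sq (T : finType) (r : rel T) (t:T) : R := Num.sqrt (degR r t).
Definition yv (T : finType) (r : rel T) (u : 'rV[R]_#|T|) (t : T) : R :=
  (sq r t)^-1 * u 0 (enum_rank t).
Definition harm (T : finType) (r : rel T) (m : R) (y : T -> R) :=
  forall t, \sum_s (r s t)%:R * y s = m * degR r t * y t.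

Lemma sum_enum (T : finType) (F : T -> R) :
  \sum_(i < #|T|) F (enum_val i) = \sum_t F t.
Proof. by rewrite (big_enum_val (A := T)). Qed.

Lemma sum_eq1l (T : finType) (a : T) (g : T -> R) :
  \sum_t (a == t)%:R * g t = g a.
Proof.
rewrite (bigD1 a) //= eqxx mul1r big1 ?addr0 // => t /negbTE.
by rewrite eq_sym => ->; rewrite mul0r.
Qed.

Lemma sum_eq1r (T : finType) (a : T) (g : T -> R) :
  \sum_t g t * (t == a)%:R = g a.
Proof.
rewrite -(sum_eq1l a g); apply: eq_bigr => t _; by rewrite mulrC eq_sym.
Qed.

Lemma degR_sum (T : finType) (r : rel T) t : degR r t = \sum_s (r t s)%:R.
Proof.
rewrite /degR /gdeg -sum1_card natr_sum big_mkcond /=.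
by apply: eq_bigr => s _; rewrite inE; case: (r t s).
Qed.

Lemma degR_sum_sym (T : finType) (r : rel T) t :
  symmetric r -> degR r t = \sum_s (r s t)%:R * 1.
Proof.
move=> hs; rewrite degR_sum; apply: eq_bigr => s _; by rewrite hs mulr1.
Qed.

Lemma nlap_entry (T : finType) (r : rel T) (u : 'rV[R]_#|T|) t :
  (u *m nlap R r) 0 (enum_rank t) =
  u 0 (enum_rank t) - (sq r t)^-1 * \sum_s (r s t)%:R * yv r u s.
Proof.
rewrite /nlap mulmxBr mulmx1 [LHS]mxE [X in _ + X]mxE; congr (_ - _).
rewrite /degmx_invsqrt mul_mx_diag mul_diag_mx mxE mulr_sumr -(@sum_enum T).
apply: eq_bigr => i _.
do 4 rewrite ?(mxE _ (fun _ i0 => (Num.sqrt (gdeg r (enum_val i0))%:R)^-1)) ?mxE.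
rewrite /adjmx ?mxE.
rewrite /yv enum_valK enum_rankK /sq /degR.
ring.
Qed.

Section Pos.
Variables (T : finType) (r : rel T).
Hypothesis degpos : forall t, (0 < gdeg r t)%N.

Lemma sq_neq0 t : sq r t != 0.
Proof. by rewrite gt_eqF // sqrtr_gt0 /degR ltr0n. Qed.

Lemma sq_sq t : sq r t * sq r t = degR r t.
Proof. by rewrite -expr2 sqr_sqrtr // /degR ler0n. Qed.

Lemma eig_char (z : R) (u : 'rV[R]_#|T|) :
  (u <= eigenspace (nlap R r) z)%MS <-> harm r (1 - z) (yv r u).
Proof.
have hs := sq_neq0; split.
  move/eigenspaceP => H t.
  move/rowP: H => /(_ (enum_rank t)).
  rewrite nlap_entry mxE -sq_sq /yv => H2.
  set X := \sum_s _ in H2 *.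
  have hX : X = sq r t * ((sq r t)^-1 * X) by rewrite mulrA mulfV ?hs // mul1r.
  have hY : (sq r t)^-1 * X = u 0 (enum_rank t) - z * u 0 (enum_rank t).
    by rewrite -H2; ring.
  rewrite hX hY; field; exact: hs.
move=> H; apply/eigenspaceP; apply/rowP => j.
rewrite -(enum_valK j) nlap_entry mxE H -sq_sq /yv; field; exact: hs.
Qed.

Lemma yv_inj (u v : 'rV[R]_#|T|) : (forall t, yv r u t = yv r v t) -> u = v.
Proof.
move=> H; apply/rowP => j; have := H (enum_val j); rewrite /yv enum_valK.
by move/mulfI; apply; rewrite invr_eq0 sq_neq0.
Qed.
End Pos.

Definition tmx (T1 T2 : finType) (r1 : rel T1) (r2 : rel T2) (K : T1 -> T2 -> R)
  : 'M[R]_(#|T1|, #|T2|) :=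
  \matrix_(i, j) ((sq r1 (enum_val i))^-1 * K (enum_val i) (enum_val j)
                   * sq r2 (enum_val j)).

Lemma transfer (T1 T2 : finType) (r1 : rel T1) (r2 : rel T2) K
   (u : 'rV[R]_#|T1|) t2 :
  sq r2 t2 != 0 ->
  yv r2 (u *m tmx r1 r2 K) t2 = \sum_t1 yv r1 u t1 * K t1 t2.
Proof.
move=> hs; rewrite /yv mxE mulr_sumr -(@sum_enum T1); apply: eq_bigr => i _.
rewrite /tmx mxE enum_valK enum_rankK; transitivity ((sq r2 t2)^-1 * sq r2 t2 * ((sq r1 (enum_val i))^-1 * u 0 i * K (enum_val i) t2)); first ring. by rewrite mulVf ?mul1r.
Qed.

Lemma rank_transfer n1 n2 a b (E : 'M[R]_(a, n1)) (F : 'M[R]_(b, n2))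
  (P : 'M[R]_(n1, n2)) (Q : 'M[R]_(n2, n1)) :
  (forall u : 'rV_n1, (u <= E)%MS -> (u *m P <= F)%MS /\ u *m P *m Q = u) ->
  (\rank E <= \rank F)%N.
Proof.
move=> H.
have h1 : (E *m P <= F)%MS.
  by apply/row_subP => i; rewrite row_mul; exact: (H _ (row_sub i E)).1.
have h2 : E *m P *m Q = E.
  by apply/row_matrixP => i; rewrite !row_mul; exact: (H _ (row_sub i E)).2.
rewrite -{1}h2; apply: leq_trans (mxrankM_maxl _ _) (mxrankS h1).
Qed.

End Gen.

Section Sdv.
Variable R : rcfType.
Variables (V : finType) (e : rel V) (k : nat).
Hypothesis hsym : symmetric e.

Local Notation S := (sdv_vert e k).
Local Notation rS := (@sdv_adj V e k).
Local Notation D := {d : V * V | e d.1 d.2}.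

Definition drev (d : D) : D :=
  exist (fun p => e p.1 p.2) ((val d).2, (val d).1) (etrans (hsym _ _) (valP d)).
Definition wrev (w : sdv_int e k) : sdv_int e k := (drev w.1, w.2).

Lemma wrevK w : wrev (wrev w) = w.
Proof. by case: w => [[[a b] h] i]; congr pair; apply: val_inj. Qed.

Lemma sdv_sym : symmetric rS.
Proof.
case=> [u|[[[a b] h] i]] [v|[[[a' b'] h'] i']] //=.
rewrite [i == _]eq_sym; congr andb; rewrite andbC; congr andb; apply: eq_sym.
Qed.

Lemma adj_inr w' w : rS (inr w') (inr w) = (w' == wrev w).
Proof.
case: w w' => [[[a b] h] i] [[[a' b'] h'] i'] /=.
apply/and3P/eqP => [[/eqP Ei /eqP Ea /eqP Eb]|E].
  by congr pair => //; apply: val_inj; rewrite /= Ea Eb.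
have E1 := congr1 (fun w : sdv_int e k => val w.1) E.
have E2 := congr1 snd E; rewrite /= in E1 E2; case: E1 => -> ->.
by rewrite E2 !eqxx.
Qed.

Lemma sumS (F : S -> R) :
  \sum_(s : S) F s = \sum_v F (inl v) + \sum_(w : sdv_int e k) F (inr w).
Proof. by rewrite /sdv_vert big_sumType. Qed.

Lemma nbr_inl u (f : S -> R) :
  \sum_s (rS s (inl u))%:R * f s =
  \sum_(w : sdv_int e k) ((val w.1).1 == u)%:R * f (inr w).
Proof. by rewrite sumS big1 ?add0r // => v _; rewrite mul0r. Qed.

Lemma nbr_inr w (f : S -> R) :
  \sum_s (rS s (inr w))%:R * f s = f (inl (val w.1).1) + f (inr (wrev w)).
Proof.
rewrite sumS sum_eq1l; congr (_ + _).
rewrite -(sum_eq1r (wrev w) (fun w' => f (inr w'))).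
by apply: eq_bigr => w' _; rewrite adj_inr mulrC.
Qed.

Lemma sig_sum (G : V * V -> R) :
  \sum_(d : D) G (val d) = \sum_(p | e p.1 p.2) G p.
Proof.
rewrite (reindex_omap (val : D -> V * V) insub); last first.
  by move=> p hp; rewrite insubT.
by apply: eq_bigl => j; rewrite (valP j) valK eqxx.
Qed.

Lemma sum_at_u (G : V -> V -> R) u :
  \sum_(d : D) ((val d).1 == u)%:R * G (val d).1 (val d).2 =
  \sum_v (e u v)%:R * G u v.
Proof.
rewrite (sig_sum (fun p => (p.1 == u)%:R * G p.1 p.2)).
rewrite -(pair_big_dep xpredT (fun a b => e a b) (fun a b => (a == u)%:R * G a b)).
rewrite /= (bigD1 u) //= [X in _ + X]big1 ?addr0; last first.
  move=> a hau; apply: big1 => b _; by rewrite (negbTE hau) mul0r.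
rewrite big_mkcond /=; apply: eq_bigr => v _; rewrite eqxx mul1r.
by case: (e u v); rewrite ?mul1r ?mul0r.
Qed.

Lemma sum_int_const u (c : V -> V -> R) :
  \sum_(w : sdv_int e k) ((val w.1).1 == u)%:R * c (val w.1).1 (val w.1).2 =
  k%:R * \sum_v (e u v)%:R * c u v.
Proof.
rewrite /sdv_int -(pair_bigA _ (fun d (i : 'I_k) => ((val d).1 == u)%:R * c (val d).1 (val d).2)) /=.
rewrite -sum_at_u mulr_sumr; apply: eq_bigr => d _.
by rewrite big_const_ord iter_addr addr0 [RHS]mulr_natl.
Qed.

Lemma degS_inl u : degR R rS (inl u) = k%:R * degR R e u.
Proof.
rewrite (degR_sum_sym R (inl u) sdv_sym) (nbr_inl u (fun _ => 1)).
rewrite (sum_int_const u (fun _ _ => 1)) (degR_sum_sym R u hsym).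
congr (_ * _); apply: eq_bigr => v _; by rewrite hsym.
Qed.

Lemma degS_inr w : degR R rS (inr w) = 2.
Proof. by rewrite (degR_sum_sym R (inr w) sdv_sym) (nbr_inr w (fun _ => 1)). Qed.

End Sdv.

Section Main.
Variable R : rcfType.
Variables (V : finType) (e : rel V) (k : nat).
Hypothesis hsym : symmetric e.
Variable zeta : R.
Local Notation mu := (1 - zeta).
Local Notation cc := (4 * mu ^+ 2 - 1).
Hypothesis hc : cc != 0.
Hypothesis hk : k%:R != 0 :> R.

Local Notation S := (sdv_vert e k).
Local Notation rS := (@sdv_adj V e k).

Definition ext (y : V -> R) (s : S) : R :=
  match s with
  | inl v => y v
  | inr w => (2 * mu * y (val w.1).1 + y (val w.1).2) / cc
  end.

Lemma ext_congr (y1 y2 : V -> R) s : (forall v, y1 v = y2 v) -> ext y1 s = ext y2 s.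
Proof. by move=> E; case: s => [v|w] /=; rewrite ?E. Qed.

Lemma harm_ext (T : finType) (r : rel T) m (y1 y2 : T -> R) :
  harm r m y1 -> (forall t, y1 t = y2 t) -> harm r m y2.
Proof.
move=> H E t; rewrite -E -(H t); apply: eq_bigr => s _; by rewrite E.
Qed.

Lemma split_sum u (g : V -> R) a :
  \sum_v (e u v)%:R * ((2 * mu * a + g v) / cc) =
  (2 * mu * a * degR R e u + \sum_v (e v u)%:R * g v) / cc.
Proof.
rewrite (degR_sum_sym R u hsym) mulr_sumr -big_split mulr_suml.
apply: eq_bigr => v _; rewrite [e v u]hsym /=; field; exact: hc.
Qed.

Lemma L1 (y : S -> R) : harm rS mu y ->
  (forall s, y s = ext (fun v => y (inl v)) s) /\
  harm e (4 * mu ^+ 3 - 3 * mu) (fun v => y (inl v)).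
Proof.
move=> H.
have ha : forall w, y (inr w) = ext (fun v => y (inl v)) (inr w).
  move=> w; have h1 := H (inr w); have h2 := H (inr (wrev hsym w)).
  rewrite (nbr_inr hsym) (degS_inr R hsym) in h1.
  rewrite (nbr_inr hsym) (degS_inr R hsym) (wrevK hsym) /= in h2.
  rewrite /=.
  set A := y (inr w) in h1 h2 *; set B := y (inr (wrev hsym w)) in h1 h2.
  set a := y (inl _) in h1 *; set b := y (inl _) in h2 *.
  have ea : a = mu * 2 * A - B by rewrite -h1; ring.
  have eb : b = mu * 2 * B - A by rewrite -h2; ring.
  rewrite ea eb; field; exact: hc.
have hall : forall s, y s = ext (fun v => y (inl v)) s by case.
split => // u.
have := H (inl u); rewrite nbr_inl (degS_inl R k hsym).
rewrite (eq_bigr (fun w : sdv_int e k => ((val w.1).1 == u)%:R *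
   ((2 * mu * y (inl (val w.1).1) + y (inl (val w.1).2)) / cc))); last first.
  by move=> w _; rewrite ha.
rewrite (sum_int_const e k u (fun a b => (2 * mu * y (inl a) + y (inl b)) / cc)).
rewrite split_sum => H'.
set Y := \sum_v _ in H' *.
have -> : Y = cc * (k%:R^-1 * (k%:R * ((2 * mu * y (inl u) * degR R e u + Y) / cc)))
   - 2 * mu * y (inl u) * degR R e u.
  by field; rewrite hk hc.
rewrite H'; field; exact: hk.
Qed.

Lemma L2 (y : V -> R) : harm e (4 * mu ^+ 3 - 3 * mu) y -> harm rS mu (ext y).
Proof.
move=> H [u|w].
  rewrite nbr_inl (degS_inl R k hsym).
  rewrite (sum_int_const e k u (fun a b => (2 * mu * y a + y b) / cc)).
  rewrite split_sum H /=; field; exact: hc.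
rewrite (nbr_inr hsym) (degS_inr R hsym) /=; field; exact: hc.
Qed.

End Main.

Section Final.
Variable R : rcfType.
Variables (V : finType) (e : rel V) (k : nat).
Hypothesis hsym : symmetric e.
Variable zeta : R.
Local Notation mu := (1 - zeta).
Local Notation cc := (4 * mu ^+ 2 - 1).
Hypothesis hc : cc != 0.
Hypothesis hk : (0 < k)%N.
Hypothesis degposG : forall v, (0 < gdeg e v)%N.

Local Notation S := (sdv_vert e k).
Local Notation rS := (@sdv_adj V e k).
Local Notation zeta' := (zeta * (4 * zeta ^+ 2 - 12 * zeta + 9)).

Lemma degposS : forall s, (0 < gdeg rS s)%N.
Proof.
case=> [u|w].
  have := degS_inl R k hsym u; rewrite /degR -natrM => /eqP; rewrite eqr_nat => /eqP ->.
  by rewrite muln_gt0 hk degposG.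
have := degS_inr R hsym w; rewrite /degR => /eqP.
by rewrite eqr_nat => /eqP ->.
Qed.

Definition Pm := tmx rS e (fun s v => (s == inl v)%:R : R).
Definition Qm := tmx e rS (fun t s =>
  match s with
  | inl v => (t == v)%:R
  | inr w => (2 * mu * (t == (val w.1).1)%:R + (t == (val w.1).2)%:R) / cc
  end).

Lemma yv_P (u : 'rV[R]_#|S|) v : yv e (u *m Pm) v = yv rS u (inl v).
Proof. by rewrite transfer ?sq_neq0 // sum_eq1r. Qed.

Lemma yv_Q (w : 'rV[R]_#|V|) s : yv rS (w *m Qm) s = ext zeta (yv e w) s.
Proof.
rewrite transfer ?sq_neq0 //; last exact: degposS.
case: s => [v|x] /=; first by rewrite sum_eq1r.
set a := (val x.1).1; set b := (val x.1).2.
rewrite (eq_bigr (fun t => (2 * mu / cc) * (yv e w t * (t == a)%:R)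
                       + cc^-1 * (yv e w t * (t == b)%:R))); last first.
  by move=> t _; field; exact: hc.
by rewrite big_split /= -!mulr_sumr !sum_eq1r; field; exact: hc.
Qed.

Lemma hkR : k%:R != 0 :> R.
Proof. by rewrite pnatr_eq0 -lt0n. Qed.

Lemma zeta'E : 1 - zeta' = 4 * mu ^+ 3 - 3 * mu.
Proof. ring. Qed.

Lemma rowP1 (u : 'rV[R]_#|S|) :
  (u <= eigenspace (nlap R rS) zeta)%MS ->
  (u *m Pm <= eigenspace (nlap R e) zeta')%MS /\ u *m Pm *m Qm = u.
Proof.
move/(eig_char degposS) => H.
have [ha hb] := L1 hsym hc hkR H.
split.
  apply/(eig_char degposG); rewrite zeta'E.
  exact: (harm_ext hb (fun v => esym (yv_P u v))).
apply: (@yv_inj R S rS degposS) => s.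
rewrite yv_Q (ha s); apply: ext_congr => v; by rewrite yv_P.
Qed.

Lemma rowP2 (w : 'rV[R]_#|V|) :
  (w <= eigenspace (nlap R e) zeta')%MS ->
  (w *m Qm <= eigenspace (nlap R rS) zeta)%MS /\ w *m Qm *m Pm = w.
Proof.
move/(eig_char degposG); rewrite zeta'E => H.
split.
  apply/(eig_char degposS).
  apply: harm_ext (L2 hsym hc H) _ => s; by rewrite yv_Q.
apply: (yv_inj degposG) => v.
by rewrite yv_P yv_Q.
Qed.

Lemma rank_eq :
  \rank (eigenspace (nlap R rS) zeta) = \rank (eigenspace (nlap R e) zeta').
Proof.
apply/eqP; rewrite eqn_leq; apply/andP; split.
  exact: (rank_transfer rowP1).
exact: (rank_transfer rowP2).
Qed.
End Final.

Theorem lemma3p2 (R : rcfType) (V : finType) (e : rel V) (k : nat) :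
  symmetric e -> irreflexive e ->
  (forall x y : V, connect e x y) -> (1 < #|V|)%N -> (1 <= k)%N ->
  forall zeta : R, zeta != 1 / 2 -> zeta != 3 / 2 ->
  eigenvalue (nlap R (@sdv_adj V e k)) zeta ->
  eigenvalue (nlap R e) (zeta * (4 * zeta ^+ 2 - 12 * zeta + 9)) /\
  \rank (eigenspace (nlap R (@sdv_adj V e k)) zeta) =
  \rank (eigenspace (nlap R e) (zeta * (4 * zeta ^+ 2 - 12 * zeta + 9))).
Proof.
move=> hsym hirr hconn hV hk zeta hz1 hz2 hev.
have degposG : forall v, (0 < gdeg e v)%N.
  move=> v; have [w hw] : exists w, w != v.
    move/card_gt1P: hV => [x [y [_ _ hxy]]].
    case: (eqVneq x v) => [hx|hx]; last by exists x.
    by exists y; rewrite -hx eq_sym.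
  case/connectP: (hconn v w) => p hp hlast.
  case: p hp hlast => [|z p] /=; first by move=> _ hwv; rewrite hwv eqxx in hw.
  case/andP => hvz _ _; rewrite /gdeg card_gt0; apply/set0Pn; exists z.
  by rewrite inE.
have hc : 4 * (1 - zeta) ^+ 2 - 1 != 0.
  have -> : 4 * (1 - zeta) ^+ 2 - 1 = (1 - 2 * zeta) * (3 - 2 * zeta) by ring.
  rewrite mulf_neq0 //.
    apply/eqP => h; move/eqP: hz1; apply.
    have -> : zeta = (2 * zeta) / 2 by field.
    by congr (_ / _); lra.
  apply/eqP => h; move/eqP: hz2; apply.
  have -> : zeta = (2 * zeta) / 2 by field.
  by congr (_ / _); lra.
have rk := @rank_eq R V e k hsym zeta hc hk degposG.
split => //.
by move: hev; rewrite /eigenvalue /= -!mxrank_eq0 rk.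
Qed.
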